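(* Let $\mathrm{Prime}\colon\mathbb{N}\to P(\mathbb{N})$, $\mathrm{Prime}(n)=\{p\mid p \text{ prime},\ \exists k\in\mathbb{N}\colon n=k\cdot p\}$. Then $\mathrm{Wall}_{\aleph_0}(\mathrm{Prime},\mathbb{N})$ equals the family of all $U\subset\mathbb{N}$ such that the set of natural numbers having a prime divisor not in $U$ is finite, and $\mathrm{Wall}_{\aleph_0}(\mathrm{Prime},\mathbb{N})$ is a proper filter on $\mathbb{N}$ but not an ultrafilter.
   Context: $\mathbb{N}=\{0,1,2,\dots\}$. For a multifunction $F\colon X\to P(X)$ and $B\subset X$, $F_{+}(B)=\{x\in X\mid F(x)\subset B\}$, and $\mathrm{Wall}_{\aleph_0}(F,X)=\{U\subset X\mid |X\setminus F_{+}(U)|<\aleph_0\}$. A filter on $X$ is a nonempty family $\Phi\subset P(X)$ with $A,B\in\Phi\iff A\cap B\in\Phi$; it is proper if $\emptyset\notin\Phi$; an ultrafilter is a proper filter such that for every $U\subset X$, $U\in\Phi$ or $X\setminus U\in\Phi$. *)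

(* Defs.v *)
From mathcomp Require Import all_boot.
From Stdlib Require Import List.
Set Implicit Arguments.

Definition pset (X : Type) := X -> Prop.

Definition upper_preimage (X : Type) (F : X -> pset X) (B : pset X) : pset X :=
  fun x => forall y, F x y -> B y.

Definition finite_pset (X : Type) (A : pset X) : Prop :=
  exists l : list X, forall x, A x -> In x l.

Definition Wall_aleph0 (X : Type) (F : X -> pset X) : pset (pset X) :=
  fun U => finite_pset (fun x => ~ upper_preimage F U x).

Definition is_filter (X : Type) (Phi : pset (pset X)) : Prop :=
  (exists A, Phi A) /\
  (forall A B : pset X, (Phi A /\ Phi B) <-> Phi (fun x => A x /\ B x)).

Definition is_proper_filter (X : Type) (Phi : pset (pset X)) : Prop :=
  is_filter Phi /\ ~ Phi (fun _ => False).

Definition is_ultrafilter (X : Type) (Phi : pset (pset X)) : Prop :=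
  is_proper_filter Phi /\ (forall U : pset X, Phi U \/ Phi (fun x => ~ U x)).

Definition PrimeMF (n : nat) : pset nat :=
  fun p => prime p /\ exists k : nat, n = k * p.

(* Main.v *)
Require Import Defs.
From Stdlib Require Import Classical.
From mathcomp Require Import all_boot.
From mathcomp Require Import zify.
Set Implicit Arguments.

Definition badp (V : pset nat) : pset nat :=
  fun n => exists p : nat, prime p /\ (p %| n) /\ ~ V p.

Lemma part1 (U : pset nat) :
  Wall_aleph0 PrimeMF U <-> finite_pset (badp U).
Proof.
  have E : forall n, (~ upper_preimage PrimeMF U n) <-> badp U n.
    move=> n; split.
    - move=> H; apply: NNPP => H2; apply: H => y [Py [k Hk]].
      apply: NNPP => Uy; apply: H2; exists y; split; [done|split; last done].
      by apply/dvdnP; exists k.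
    - move=> [p [Pp [Dp NU]]] H; apply: NU; apply: H; split; first done.
      by move/dvdnP: Dp.
  split => [[l Hl]|[l Hl]]; exists l => x Hx; apply: Hl; by apply/E.
Qed.

Lemma in_sumn x (l : list nat) : List.In x l -> x <= sumn l.
Proof.
  elim: l => [|a l IH] //= [->|H]; first by apply: leq_addr.
  apply: leq_trans (IH H) _; apply: leq_addl.
Qed.

Lemma bad_inf (V : pset nat) q : prime q -> ~ V q -> ~ finite_pset (badp V).
Proof.
  move=> Pq NV [l Hl].
  have Hn := Hl (q * (sumn l).+1) (ex_intro _ q (conj Pq (conj (dvdn_mulr _ (dvdnn q)) NV))).
  have := in_sumn _ _ Hn.
  have q0 : 0 < q by apply: prime_gt0.
  have : (sumn l).+1 <= q * (sumn l).+1 by rewrite leq_pmull.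
  lia.
Qed.

Lemma fin_sub (A B : pset nat) : (forall x, A x -> B x) -> finite_pset B -> finite_pset A.
Proof. move=> H [l Hl]; exists l => x Hx; exact: Hl (H _ Hx). Qed.

Lemma fin_union (A B : pset nat) : finite_pset A -> finite_pset B ->
  finite_pset (fun x => A x \/ B x).
Proof.
  move=> [l1 H1] [l2 H2]; exists (l1 ++ l2) => x [Hx|Hx]; apply: List.in_or_app;
  [left; exact: H1 | right; exact: H2].
Qed.

Theorem lemma6p16 :
  (forall U : pset nat,
     Wall_aleph0 PrimeMF U <->
     finite_pset (fun n : nat => exists p : nat, prime p /\ (p %| n) /\ ~ U p)) /\
  is_proper_filter (Wall_aleph0 PrimeMF) /\
  ~ is_ultrafilter (Wall_aleph0 PrimeMF).
Proof.
  have filt : is_proper_filter (Wall_aleph0 PrimeMF).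
    split; last by rewrite part1; apply: (@bad_inf _ 2).
    split.
    - exists (fun _ => True); apply/part1; exists nil => x [p [_ [_ H]]]; exact: H.
    - move=> A B; rewrite !part1; split.
      + move=> [HA HB]; eapply fin_sub; last exact: (fin_union HA HB).
        move=> n [p [Pp [Dp N]]].
        case: (classic (A p)) => Ap.
        * right; exists p; split=> //; split=> // Bp; exact: N.
        * left; exists p; split=> //.
      + move=> H; split; (eapply fin_sub; last exact: H) => n [p [Pp [Dp N]]]; exists p;
        split=> //; split=> //; case=> //.
  split; first exact: part1.
  split; first exact: filt.
  move=> [_ H]; case: (H (fun p => p = 2)); rewrite part1.
  - by apply: (@bad_inf _ 3).
  - by apply: (@bad_inf _ 2).
Qed.
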